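(* Let $p\ge1$ be an integer, and let $\bm U^0\in\mathbb V_h$ and $\bm U^1,\dots,\bm U^M\in\mathbb V_h$ satisfy the LCN-MP scheme $$(\bm I+\mathbb A^2)\frac{\bm U^1-\bm U^0}{\tau}+\mathbb D(\bm U^0)\frac{\bm U^1+\bm U^0}{2}=0,$$ $$(\bm I+\mathbb A^2)\frac{\bm U^{n+1}-\bm U^n}{\tau}+\mathbb D\Big(\frac{3\bm U^n-\bm U^{n-1}}{2}\Big)\frac{\bm U^{n+1}+\bm U^n}{2}=0,\quad n=1,\dots,M-1.$$ Then the discrete momentum $P^n=\|\bm U^n\|_h^2+|\bm U^n|_{2,h}^2$ satisfies $P^n=P^{n-1}=\cdots=P^0$ for all $0\le n\le M$.
   Context: $\Omega=[x_L,x_R]\times[y_L,y_R]$, $l_1=x_R-x_L$, $l_2=y_R-y_L$, $N_1,N_2$ even, $h_r=l_r/N_r$, grid points $x_{j_1}=x_L+j_1h_1$, $y_{j_2}=y_L+j_2h_2$, $0\le j_r\le N_r-1$; $\tau>0$. $\mathbb V_h$ is the space of grid functions $U_{j_1,j_2}$ periodic in both indices, identified with vectors $\bm U=(U_{0,0},U_{1,0},\dots,U_{N_1-1,0},U_{0,1},\dots,U_{N_1-1,N_2-1})^T$ ($j_1$ fastest). $\langle\bm U,\bm V\rangle_h=h_1h_2\sum_{j_1,j_2}U_{j_1,j_2}V_{j_1,j_2}$, $\|\bm U\|_h^2=\langle\bm U,\bm U\rangle_h$. For $r=1,2$, $\mu_r=2\pi/l_r$ and $g^{(1)}_{k}(x)=\frac1{N_1}\sum_{l=-N_1/2}^{N_1/2}\frac1{a_l}e^{\mathrm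 il\mu_1(x-x_k)}$ with $a_l=1$ for $|l|<N_1/2$, $a_{\pm N_1/2}=2$ (similarly $g^{(2)}_k(y)$ with $N_2,\mu_2,y_k$). $\bm D_s^x$ is the $N_1\times N_1$ matrix with entries $\frac{d^s}{dx^s}g^{(1)}_k(x_j)$ and $\bm D_s^y$ the $N_2\times N_2$ matrix with entries $\frac{d^s}{dy^s}g^{(2)}_k(y_j)$. With $\otimes$ the Kronecker product: $\mathbb A=\bm I_{N_2}\otimes\bm D_2^x+\bm D_2^y\otimes\bm I_{N_1}$, $\mathbb B=\bm I_{N_2}\otimes\bm D_3^x+\bm D_2^y\otimes\bm D_1^x$, $\mathbb L_h=\bm I_{N_2}\otimes\bm D_1^x+\bm D_1^y\otimes\bm I_{N_1}$, and for $\bm W\in\mathbb V_h$, $\mathbb D(\bm W)=\mathbb B+\mathbb L_h+\frac1{p+2}(\mathrm{diag}(\bm W^p)\mathbb L_h+\mathbb L_h\mathrm{diag}(\bm W^p))$, $\bm W^p$ the componentwise $p$-th power. $|\bm U|_{2,h}=\|\mathbb A\bm U\|_h$. *)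

(* Defs.v *)
From HB Require Import structures.
From mathcomp Require Import all_boot all_order all_algebra.
From mathcomp Require Import Rstruct.
From Stdlib Require Reals.
From Coquelicot Require Derive.

Set Implicit Arguments.
Unset Strict Implicit.
Unset Printing Implicit Defensive.
Import Order.TTheory GRing.Theory Num.Theory.
Local Open Scope ring_scope.

(* Kronecker product A (x) B, with the index of B running fastest:
   (A (x) B)_{(i2,i1),(j2,j1)} = A_{i2 j2} B_{i1 j1}, row index i2*n+i1. *)
Lemma kron_divP (m n : nat) (i : 'I_(m * n)) : ((i %/ n)%N < m)%N.
Proof.
case: n i => [|n] i; first by case: i => i; rewrite muln0.
by rewrite ltn_divLR // ltn_ord.
Qed.

Lemma kron_modP (m n : nat) (i : 'I_(m * n)) : ((i %% n)%N < n)%N.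
Proof.
case: n i => [|n] i; first by case: i => i; rewrite muln0.
by rewrite ltn_mod.
Qed.

Definition kq (m n : nat) (i : 'I_(m * n)) : 'I_m := Ordinal (kron_divP i).
Definition kr (m n : nat) (i : 'I_(m * n)) : 'I_n := Ordinal (kron_modP i).

Definition kron (m n : nat) (A : 'M[Rdefinitions.R]_m) (B : 'M[Rdefinitions.R]_n) : 'M[Rdefinitions.R]_(m * n) :=
  \matrix_(i, j) (A (kq i) (kq j) * B (kr i) (kr j)).

(* weight a_l, l = m - N/2 for m = 0..N : a = 2 iff |l| = N/2 *)
Definition aw (N m : nat) : Rdefinitions.R := if (m == 0)%N || (m == N)%N then 2 else 1.

(* The trigonometric cardinal function
   g_k(x) = 1/N sum_{l=-N/2}^{N/2} 1/a_l e^{i l mu (x - x_k)}.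
   Its imaginary part vanishes identically (sin is odd in l and a_l is even
   in l), so we write its (real) value. *)
Definition gfun (N : nat) (mu xk x : Rdefinitions.R) : Rdefinitions.R :=
  (N%:R)^-1 * \sum_(m < N.+1)
     (aw N m)^-1 * Rtrigo_def.cos ((m%:R - (N./2)%:R) * mu * (x - xk)).

Definition Dmat (N : nat) (xL l : Rdefinitions.R) (s : nat) : 'M[Rdefinitions.R]_N :=
  let h := l / N%:R in
  \matrix_(j, k) Derive.Derive_n
      (gfun N (2 * Rtrigo1.PI / l) (xL + (k : nat)%:R * h)) s (xL + (j : nat)%:R * h).

Section Ops.
Variables (N1 N2 : nat) (xL xR yL yR : Rdefinitions.R) (p : nat).
Let l1 := xR - xL.
Let l2 := yR - yL.
Definition Dx s := Dmat N1 xL l1 s.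
Definition Dy s := Dmat N2 yL l2 s.

Definition Amat : 'M[Rdefinitions.R]_(N2 * N1) := kron 1%:M (Dx 2) + kron (Dy 2) 1%:M.
Definition Bmat : 'M[Rdefinitions.R]_(N2 * N1) := kron 1%:M (Dx 3) + kron (Dy 2) (Dx 1).
Definition Lmat : 'M[Rdefinitions.R]_(N2 * N1) := kron 1%:M (Dx 1) + kron (Dy 1) 1%:M.

Definition diagpow (W : 'cV[Rdefinitions.R]_(N2 * N1)) : 'M[Rdefinitions.R]_(N2 * N1) :=
  diag_mx (\row_i (W i ord0 ^+ p)).

Definition Dop (W : 'cV[Rdefinitions.R]_(N2 * N1)) : 'M[Rdefinitions.R]_(N2 * N1) :=
  Bmat + Lmat + (p.+2%:R)^-1 *: (diagpow W *m Lmat + Lmat *m diagpow W).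

Definition ip (U V : 'cV[Rdefinitions.R]_(N2 * N1)) : Rdefinitions.R :=
  (l1 / N1%:R) * (l2 / N2%:R) * \sum_i U i ord0 * V i ord0.
Definition nrm2 U := ip U U.
Definition semi2sq U := nrm2 (Amat *m U).
Definition momentum U := nrm2 U + semi2sq U.
End Ops.

Arguments Dop : clear implicits.
Arguments diagpow : clear implicits.
Arguments ip : clear implicits.
Arguments nrm2 : clear implicits.
Arguments semi2sq : clear implicits.
Arguments momentum : clear implicits.

(* Main.v *)
Require Import Defs.
From HB Require Import structures.
From mathcomp Require Import all_boot all_order all_algebra.
From mathcomp Require Import Rstruct.
From Stdlib Require Reals.
Import GRing.Theory Num.Theory.
Local Open Scope ring_scope.

Module Aux.
From Stdlib Require Import Reals.
From Coquelicot Require Import Coquelicot.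
From mathcomp Require Import zify.
Import GRing.Theory Num.Theory.
Local Open Scope ring_scope.

Definition bb (N : nat) (mu : R) (m : nat) : R := ((m%:R - (N./2)%:R) * mu).
Definition HH (N : nat) (mu : R) (s : nat) (t : R) : R :=
  ((N%:R)^-1 * \sum_(m < N.+1) (aw N m)^-1 *
     (bb N mu m ^+ s * cos (bb N mu m * t + s%:R * (PI/2)))).

Lemma is_derive_bigsum (I : Type) (r : seq I) (F : I -> R -> R) (F' : I -> R) x :
  (forall i, is_derive (F i) x (F' i)) ->
  is_derive (fun t => (\sum_(i <- r) F i t)) x (\sum_(i <- r) F' i).
Proof.
move=> H.
elim: r => [|i r IH].
  apply: (@is_derive_ext R_AbsRing R_NormedModule (fun _ => 0)); first by move=> t; rewrite big_nil.
  rewrite big_nil. exact: is_derive_const.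
apply: (@is_derive_ext R_AbsRing R_NormedModule (fun t => Rplus (F i t) (\big[+%R/0]_(j <- r) F j t))).
  by move=> t; rewrite big_cons.
rewrite big_cons. exact: is_derive_plus.
Qed.

Lemma cos_shift (y : R) : cos (y + PI/2) = - sin y.
Proof. rewrite cos_plus cos_PI2 sin_PI2. rewrite !RmultE !RminusE. by rewrite mulr0 mulr1 sub0r. Qed.

Lemma term_val (c B phi xk x : R) (k : nat) :
  Rmult c (Rmult (B ^+ k) (Rmult (Rmult B (Rminus 1 0)) (Ropp (sin (Rplus (Rmult B (Rminus x xk)) phi)))))
  = c * (B ^+ k.+1 * cos (B * (x - xk) + (phi + PI/2))).
Proof.
  rewrite ?RplusE ?RmultE ?RminusE ?RoppE ?RdivE addrA cos_shift.
  rewrite exprS ?RmultE ?RoppE ?RminusE subr0 mulr1.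
  rewrite ?RplusE. congr (_ * _). rewrite mulrA [_ * B]mulrC -mulrA. by [].
Qed.

Lemma term_derive (c B phi xk x : R) (k : nat) :
  is_derive (fun t => (c * (B ^+ k * cos (B * (t - xk) + phi)))) x
    (c * (B ^+ k.+1 * cos (B * (x - xk) + (phi + PI/2)))).
Proof.
rewrite -term_val.
apply: is_derive_scal. apply: is_derive_scal.
apply: (is_derive_comp cos (fun t => Rplus (Rmult B (Rminus t xk)) phi)).
  apply: is_derive_cos.
auto_derive; first done. ring.
Qed.

Lemma HH_derive N mu s xk x :
  is_derive (fun y => HH N mu s (y - xk)) x (HH N mu s.+1 (x - xk)).
Proof.
rewrite /HH.
have E : forall m : 'I_N.+1, cos (bb N mu m * (x - xk) + s.+1%:R * (PI / 2))
   = cos (bb N mu m * (x - xk) + (s%:R * (PI / 2) + PI/2)).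
  by move=> m; rewrite ?RplusE ?RmultE -[s.+1]addn1 natrD mulrDl mul1r.
under eq_bigr do rewrite E.
apply: is_derive_scal.
apply: is_derive_bigsum => m.
exact: term_derive.
Qed.

Lemma Dn_gfun N mu xk s x : Derive_n (gfun N mu xk) s x = HH N mu s (x - xk).
Proof.
elim: s x => [|s IH] x /=.
  rewrite /gfun /HH; congr (_ * _); apply: eq_bigr => m _.
  by rewrite ?RplusE ?RmultE expr0 mul1r mul0r addr0.
rewrite (Derive_ext _ (fun y => HH N mu s (y - xk))) //.
apply: is_derive_unique. exact: HH_derive.
Qed.

Lemma cos_2sh (z : R) s :
  cos (z + s%:R * (PI/2) + s%:R * (PI/2)) = (-1)^+s * cos z.
Proof.
elim: s z => [|s IH] z.
  by rewrite ?RplusE ?RmultE ?RdivE mul0r !addr0 expr0 mul1r.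
rewrite ?RplusE ?RmultE ?RdivE.
have -> : z + s.+1%:R * (PI/2) + s.+1%:R * (PI/2) =
   (z + s%:R * (PI/2) + s%:R * (PI/2)) + (PI/2 + PI/2).
  rewrite -[s.+1]addn1 natrD mulrDl mul1r.
  by rewrite -addrA addrACA !addrA.
have hh : PI/2 + PI/2 = PI by rewrite [RHS]double_var.
rewrite hh.
by rewrite neg_cos IH exprS mulN1r mulNr RoppE.
Qed.

Lemma cos_par (B t : R) s :
  cos (B * (- t) + s%:R*(PI/2)) = (-1)^+s * cos (B*t + s%:R*(PI/2)).
Proof.
have E : cos (B * (- t) + s%:R*(PI/2)) = cos (B * t - s%:R*(PI/2)).
  rewrite -cos_neg ?RplusE ?RmultE ?RoppE ?RdivE.
  by rewrite opprD mulrN opprK.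
rewrite E.
have := cos_2sh (B * t - s%:R*(PI/2)) s.
rewrite ?RplusE ?RmultE ?RoppE ?RdivE.
rewrite ?RminusE ?RplusE ?RmultE ?RoppE ?RdivE subrK => ->.
by rewrite signrMK.
Qed.

Lemma HH_par N mu s t : HH N mu s (- t) = (-1)^+s * HH N mu s t.
Proof.
rewrite /HH ?RmultE [RHS]mulrCA; congr (_ * _).
rewrite mulr_sumr; apply: eq_bigr => m _.
rewrite ?RplusE ?RmultE ?RoppE ?RdivE cos_par.
by rewrite [RHS]mulrCA; congr (_ * _); rewrite [RHS]mulrCA.
Qed.

Lemma Dmat_tr N xL l s : (Dmat N xL l s)^T = (-1)^+s *: Dmat N xL l s.
Proof.
apply/matrixP => j k; rewrite !mxE !Dn_gfun.
set a := xL + _ * _; set b := xL + _ * _.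
rewrite ?RminusE.
have -> : a - b = - (b - a) by rewrite opprB.
by rewrite HH_par.
Qed.

Lemma kron_tr m n (A : 'M[R]_m) (B : 'M[R]_n) : (kron A B)^T = kron A^T B^T.
Proof. by apply/matrixP => i j; rewrite !mxE. Qed.

Lemma kronZl m n c (A : 'M[R]_m) (B : 'M[R]_n) : kron (c *: A) B = c *: kron A B.
Proof. by apply/matrixP => i j; rewrite !mxE mulrA. Qed.

Lemma kronZr m n c (A : 'M[R]_m) (B : 'M[R]_n) : kron A (c *: B) = c *: kron A B.
Proof. by apply/matrixP => i j; rewrite !mxE mulrCA. Qed.

Lemma sign_odd s : odd s -> (-1)^+s = -1 :> R.
Proof. by move=> h; rewrite -signr_odd h expr1. Qed.
Lemma sign_even s : ~~ odd s -> (-1)^+s = 1 :> R.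
Proof. by move=> h; rewrite -signr_odd (negbTE h) expr0. Qed.

Lemma Dtr_odd N xL l s : odd s -> (Dmat N xL l s)^T = - Dmat N xL l s.
Proof. by move=> h; rewrite Dmat_tr sign_odd // scaleN1r. Qed.
Lemma Dtr_even N xL l s : ~~ odd s -> (Dmat N xL l s)^T = Dmat N xL l s.
Proof. by move=> h; rewrite Dmat_tr sign_even // scale1r. Qed.

Lemma trD m n (A B : 'M[R]_(m, n)) : (A + B)^T = A^T + B^T.
Proof. by apply/matrixP => i j; rewrite !mxE. Qed.
Lemma trZ m n c (A : 'M[R]_(m, n)) : (c *: A)^T = c *: A^T.
Proof. by apply/matrixP => i j; rewrite !mxE. Qed.

Section Ops2.
Variables (N1 N2 : nat) (xL xR yL yR : R) (p : nat).

Lemma Amat_tr : (Amat N1 N2 xL xR yL yR)^T = Amat N1 N2 xL xR yL yR.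
Proof.
by rewrite /Amat /Defs.Dx /Defs.Dy trD !kron_tr !trmx1 !Dtr_even.
Qed.

Lemma Lmat_tr : (Lmat N1 N2 xL xR yL yR)^T = - Lmat N1 N2 xL xR yL yR.
Proof.
rewrite /Lmat /Defs.Dx /Defs.Dy trD !kron_tr !trmx1 !Dtr_odd //.
by rewrite -!scaleN1r kronZl kronZr scalerDr.
Qed.

Lemma Bmat_tr : (Bmat N1 N2 xL xR yL yR)^T = - Bmat N1 N2 xL xR yL yR.
Proof.
rewrite /Bmat /Defs.Dx /Defs.Dy trD !kron_tr !trmx1 Dtr_odd // Dtr_even // Dtr_odd //.
by rewrite -!scaleN1r !kronZr scalerDr.
Qed.

Lemma Dop_tr W : (Dop N1 N2 xL xR yL yR p W)^T = - Dop N1 N2 xL xR yL yR p W.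
Proof.
rewrite /Dop; move: Bmat_tr Lmat_tr.
move: (Bmat _ _ _ _ _ _) (Lmat _ _ _ _ _ _) => B L HB HL.
rewrite !trD trZ !trD !trmx_mul HB HL.
rewrite /diagpow tr_diag_mx mulmxN mulNmx.
rewrite [RHS]opprD [- (B + L)]opprD; congr (_ + _).
by rewrite -scalerN opprD addrC.
Qed.
End Ops2.

Definition sd n (u v : 'cV[R]_n) : R := \sum_i u i ord0 * v i ord0.
Arguments sd {n}.

Lemma sdE n (u v : 'cV[R]_n) : sd u v = (u^T *m v) ord0 ord0.
Proof. by rewrite /sd mxE; apply: eq_bigr => i _; rewrite mxE. Qed.

Lemma sdC n (u v : 'cV[R]_n) : sd u v = sd v u.
Proof. by apply: eq_bigr => i _; rewrite mulrC. Qed.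

Lemma sdDr n (u v w : 'cV[R]_n) : sd u (v + w) = sd u v + sd u w.
Proof. by rewrite /sd -big_split; apply: eq_bigr => i _; rewrite mxE mulrDr. Qed.

Lemma sdZr n c (u v : 'cV[R]_n) : sd u (c *: v) = c * sd u v.
Proof. by rewrite /sd mulr_sumr; apply: eq_bigr => i _; rewrite mxE mulrCA. Qed.

Lemma sdM n (M : 'M[R]_n) (u v : 'cV[R]_n) : sd u (M *m v) = sd (M^T *m u) v.
Proof. by rewrite !sdE trmx_mul trmxK mulmxA. Qed.

Lemma sd_diff n (u v : 'cV[R]_n) : sd (u + v) (u - v) = sd u u - sd v v.
Proof.
rewrite /sd -sumrB; apply: eq_bigr => i _; rewrite !mxE.
by rewrite mulrDl !mulrBr [v i ord0 * u i ord0]mulrC addrA subrK.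
Qed.

Lemma sd_skew n (K : 'M[R]_n) (w : 'cV[R]_n) : K^T = - K -> sd w (K *m w) = 0.
Proof.
move=> HK.
have h : sd w (K *m w) = - sd w (K *m w).
  rewrite {1}sdM HK sdC.
  rewrite /sd -sumrN; apply: eq_bigr => i _.
  by rewrite mulNmx mxE mulrN.
have h2 : sd w (K *m w) *+ 2 == 0 by rewrite mulr2n {2}h subrr.
by move: h2; rewrite mulrn_eq0 /= => /eqP.
Qed.

Lemma step n (S K : 'M[R]_n) (a b : 'cV[R]_n) t :
  S^T = S -> K^T = - K -> t != 0 ->
  (1%:M + S *m S) *m (t *: (a - b)) + K *m (2^-1 *: (a + b)) = 0 ->
  sd a a + sd (S *m a) (S *m a) = sd b b + sd (S *m b) (S *m b).
Proof.
move=> HS HK ht E.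
have H := congr1 (sd (a + b)) E.
rewrite sdDr -!scalemxAr !sdZr sd_skew // mulr0 addr0 in H.
rewrite mulmxDl mul1mx sdDr -mulmxA [sd (a + b) (S *m _)]sdM HS mulmxDr mulmxBr !sd_diff in H.
have E0 : sd (a + b) (0 : 'cV[R]_n) = 0 by rewrite /sd big1 // => i _; rewrite !mxE mulr0.
move: H; rewrite E0.
move/eqP; rewrite mulf_eq0 (negbTE ht) /= => /eqP h.
apply/eqP; rewrite -subr_eq0; apply/eqP; rewrite -h.
by rewrite opprD !addrA; congr (_ + _); rewrite -!addrA; congr (_ + _); rewrite addrC.
Qed.

Lemma momE N1 N2 xL xR yL yR U :
  momentum N1 N2 xL xR yL yR U =
  (xR - xL) / N1%:R * ((yR - yL) / N2%:R) *
    (sd U U + sd (Amat N1 N2 xL xR yL yR *m U) (Amat N1 N2 xL xR yL yR *m U)).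
Proof. by rewrite mulrDr. Qed.

Lemma nat_aux k M : leq k.+2 M -> leq k.+1 (subn M 1).
Proof. lia. Qed.

End Aux.
Import Aux.

Theorem theorem3p1 (xL xR yL yR : Rdefinitions.R) (N1 N2 : nat) (tau : Rdefinitions.R) (p M : nat)
  (U : nat -> 'cV[Rdefinitions.R]_(N2 * N1)) :
  xL < xR -> yL < yR ->
  (0 < N1)%N -> (0 < N2)%N -> ~~ odd N1 -> ~~ odd N2 ->
  0 < tau -> (1 <= p)%N ->
  (1 <= M)%N ->
  (1%:M + Amat N1 N2 xL xR yL yR *m Amat N1 N2 xL xR yL yR) *m
      (tau^-1 *: (U 1%N - U 0%N))
    + Dop N1 N2 xL xR yL yR p (U 0%N) *m (2^-1 *: (U 1%N + U 0%N)) = 0 ->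
  (forall n, (1 <= n)%N -> (n <= M - 1)%N ->
    (1%:M + Amat N1 N2 xL xR yL yR *m Amat N1 N2 xL xR yL yR) *m
        (tau^-1 *: (U n.+1 - U n))
      + Dop N1 N2 xL xR yL yR p (2^-1 *: (3%:R *: U n - U n.-1))
          *m (2^-1 *: (U n.+1 + U n)) = 0) ->
  forall n, (n <= M)%N ->
    momentum N1 N2 xL xR yL yR (U n) = momentum N1 N2 xL xR yL yR (U 0%N).
Proof.
move=> _ _ _ _ _ _ htau _ hM E0 En.
have ht : tau^-1 != 0 by rewrite invr_eq0 (lt0r_neq0 htau).
have key : forall k, (k < M)%N ->
    momentum N1 N2 xL xR yL yR (U k.+1) = momentum N1 N2 xL xR yL yR (U k).
  move=> k hk; rewrite !momE; congr (_ * _).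
  case: k hk => [|k] hk.
    exact: (step _ _ _ _ _ _ (Amat_tr _ _ _ _ _ _) (Dop_tr _ _ _ _ _ _ _ _) ht E0).
  have Ek := En k.+1 isT (nat_aux _ _ hk).
  move: Ek; set K := Dop _ _ _ _ _ _ _ _ => Ek.
  exact: (step _ _ K _ _ _ (Amat_tr _ _ _ _ _ _) (Dop_tr _ _ _ _ _ _ _ _) ht Ek).
elim=> [|n IH] hn //.
by rewrite key // IH // ltnW.
Qed.
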